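(* Let $n=2k$, $1<r<k$ with $\gcd(r,k)=1$, and $G(x)=\sum_{i=1}^{2^r-1}x^{(i2^{k-r}+1)(2^k-1)+1}$, a vectorial bent function $\mathbb{F}_{2^n}\to\mathbb{F}_{2^k}$. For $\lambda\in\mathbb{F}_{2^k}^*$ let $G_\lambda(x)=\mathrm{Tr}^k_1(\lambda G(x))$ and let $G_\lambda^*$ be its dual. Let $t=2^{r-1}-1$ and $d_t=(2^k-1)(t2^{k-r}+1)+1$ (so that $\gcd(d_t,2^n-1)=1$). For $\lambda\in\mathbb{F}_{2^k}^*$ let $\delta$ be the unique element of $\mathbb{F}_{2^n}$ with $\lambda=\delta^{d_t}$. Then $G_\lambda^*(x)=G_1^*(\delta^{-1}x)$. In particular, $D_aD_bG_\lambda^*=0$ for all $a,b\in\mathbb{F}_{2^k}^*$.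
   Context: $\mathrm{Tr}^m_1(x)=\sum_{i=0}^{m-1}x^{2^i}$. For a bent Boolean function $f$ on $\mathbb{F}_{2^n}$ (i.e. $|W_f(a)|=2^{n/2}$ for all $a$, where $W_f(a)=\sum_x(-1)^{f(x)+\mathrm{Tr}^n_1(ax)}$), the dual $f^*$ is defined by $W_f(a)=2^{n/2}(-1)^{f^*(a)}$. $D_aD_bf(x)=f(x)+f(x+a)+f(x+b)+f(x+a+b)$. *)

(* Defs.v *)
From HB Require Import structures.
From mathcomp Require Import all_boot all_order all_algebra all_field.
Set Implicit Arguments. Unset Strict Implicit. Unset Printing Implicit Defensive.
Import GRing.Theory Num.Theory.
Local Open Scope ring_scope.

Definition trace (F : finFieldType) (m : nat) (x : F) : F :=
  \sum_(i < m) x ^+ (2 ^ i).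

(* (-1)^e for an element e of F_2 (seen inside F): 1 if e = 0, -1 otherwise. *)
Definition sgnF (F : finFieldType) (e : F) : int := if e == 0 then 1 else -1.

Definition sgnb (b : bool) : int := if b then -1 else 1.

Definition walsh (F : finFieldType) (n : nat) (f : F -> bool) (a : F) : int :=
  \sum_(x : F) sgnb (f x) * sgnF (trace n (a * x)).

Definition bent (F : finFieldType) (n : nat) (f : F -> bool) : Prop :=
  forall a : F, `|walsh n f a| = (2 ^ (n %/ 2))%:Z.

(* Dual: W_f(a) = 2^(n/2) (-1)^(f^*(a)); i.e. f^*(a) = 1 iff W_f(a) < 0.
   (This agrees with the paper's definition whenever f is bent.) *)
Definition dual (F : finFieldType) (n : nat) (f : F -> bool) (a : F) : bool :=
  walsh n f a < 0.

Definition D2 (F : finFieldType) (f : F -> bool) (a b x : F) : bool :=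
  (f x (+) f (x + a) (+) f (x + b) (+) f (x + a + b)).

Definition Gfun (F : finFieldType) (k r : nat) (x : F) : F :=
  \sum_(1 <= i < 2 ^ r) x ^+ ((i * 2 ^ (k - r) + 1) * (2 ^ k - 1) + 1).

Definition Glam (F : finFieldType) (k r : nat) (lam : F) (x : F) : bool :=
  trace k (lam * Gfun k r x) != 0.

(* Main.v *)
Require Import Defs.
From HB Require Import structures.
From mathcomp Require Import all_boot all_order all_algebra all_field.
From mathcomp Require Import zify ring.
Set Implicit Arguments. Unset Strict Implicit. Unset Printing Implicit Defensive.
Import GRing.Theory Num.Theory.
Local Open Scope ring_scope.

Lemma sqrD2 (F : finFieldType) (hchar : (2 \in [pchar F])%N) (x y : F) :
  (x + y) ^+ 2 = x ^+ 2 + y ^+ 2.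
Proof. by rewrite sqrrD (mulrn_pchar hchar) addr0. Qed.

Lemma frobD (F : finFieldType) (hchar : (2 \in [pchar F])%N) (j : nat) (x y : F) :
  (x + y) ^+ (2 ^ j) = x ^+ (2 ^ j) + y ^+ (2 ^ j).
Proof.
elim: j => [|j IH]; first by rewrite !expr1.
by rewrite expnSr !exprM IH sqrD2.
Qed.

Lemma frob0 (F : finFieldType) (j : nat) : (0 : F) ^+ (2 ^ j) = 0.
Proof. by rewrite expr0n expn_eq0. Qed.

Lemma frob_sum (F : finFieldType) (hchar : (2 \in [pchar F])%N) (j : nat)
  (I : Type) (s : seq I) (P : pred I) (G : I -> F) :
  (\sum_(i <- s | P i) G i) ^+ (2 ^ j) = \sum_(i <- s | P i) (G i) ^+ (2 ^ j).
Proof.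
apply: (big_morph (fun x : F => x ^+ (2 ^ j))).
- by move=> x y; rewrite (frobD hchar).
- exact: frob0.
Qed.

Lemma frob_inj (F : finFieldType) (hchar : (2 \in [pchar F])%N) (j : nat) (x y : F) :
  x ^+ (2 ^ j) = y ^+ (2 ^ j) -> x = y.
Proof.
move=> h; apply/eqP; rewrite -subr_eq0.
have : (x - y) ^+ (2 ^ j) == 0.
  by rewrite (oppr_pchar2 hchar) (frobD hchar) h (addrr_pchar2 hchar).
by rewrite expf_eq0 => /andP[].
Qed.

Lemma sub2 (F : finFieldType) (hchar : (2 \in [pchar F])%N) (x y : F) : x - y = x + y.
Proof. by rewrite (oppr_pchar2 hchar). Qed.

Lemma frobK (F : finFieldType) (n : nat) (hcard : #|F| = (2 ^ n)%N) (x : F) :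
  x ^+ (2 ^ n) = x.
Proof. by rewrite -hcard expf_card. Qed.

Lemma trace_add (F : finFieldType) (hchar : (2 \in [pchar F])%N) m (x y : F) :
  trace m (x + y) = trace m x + trace m y.
Proof. by rewrite /trace -big_split; apply: eq_bigr => i _; rewrite (frobD hchar). Qed.

Definition bit (F : finFieldType) (e : F) := e ^+ 2 = e.

Lemma bitP (F : finFieldType) (e : F) : bit e -> e = 0 \/ e = 1.
Proof.
rewrite /bit => h.
have : e * (e - 1) == 0 by rewrite mulrBr mulr1 -expr2 h subrr.
rewrite mulf_eq0 subr_eq0 => /orP[] /eqP ->; by [left | right].
Qed.

Lemma bit_pow (F : finFieldType) (e : F) j : bit e -> e ^+ (2 ^ j) = e.
Proof.
move=> h; elim: j => [|j IH]; first by rewrite expr1.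
by rewrite expnSr exprM IH.
Qed.

Lemma trace_sq (F : finFieldType) (hchar : (2 \in [pchar F])%N) m (z : F) :
  z ^+ (2 ^ m) = z -> bit (trace m z).
Proof.
move=> hz; rewrite /bit /trace.
have -> : (\sum_(i < m) z ^+ (2 ^ i)) ^+ 2 = (\sum_(i < m) z ^+ (2 ^ i)) ^+ (2 ^ 1) by [].
rewrite (frob_sum hchar).
under eq_bigr => i _ do rewrite -exprM -expnSr.
case: m hz => [|m] hz; first by rewrite !big_ord0.
rewrite big_ord_recr big_ord_recl /= hz addrC.
by congr (_ + _); apply: eq_bigr => i _.
Qed.

Lemma trace_pow (F : finFieldType) (hchar : (2 \in [pchar F])%N) m (z : F) j :
  trace m (z ^+ (2 ^ j)) = (trace m z) ^+ (2 ^ j).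
Proof.
rewrite /trace (frob_sum hchar); apply: eq_bigr => i _; by rewrite exprAC.
Qed.

Lemma trace_V (F : finFieldType) (hchar : (2 \in [pchar F])%N) k (z : F) :
  z ^+ (2 ^ k) = z -> trace (k + k) z = 0.
Proof.
move=> hz; rewrite /trace big_split_ord /=.
have -> : \sum_(i < k) z ^+ (2 ^ (k + i)) = \sum_(i < k) z ^+ (2 ^ i).
  by apply: eq_bigr => i _; rewrite expnD exprM hz.
by rewrite (addrr_pchar2 hchar).
Qed.

Lemma trace_T (F : finFieldType) (hchar : (2 \in [pchar F])%N) k (z : F) :
  trace k (z + z ^+ (2 ^ k)) = trace (k + k) z.
Proof.
rewrite /trace big_split_ord /= -big_split /=; apply: eq_bigr => i _.
by rewrite (frobD hchar) -exprM -expnD addnC.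
Qed.

Lemma trace_nonzero (F : finFieldType) n (hcard : #|F| = (2 ^ n)%N) (hn : (0 < n)%N) :
  exists y : F, trace n y != 0.
Proof.
pose p : {poly F} := \sum_(i < n) 'X^(2 ^ i).
have hp : forall y, p.[y] = trace n y.
  by move=> y; rewrite /p horner_sum /trace; apply: eq_bigr => i _; rewrite hornerXn.
have pn0 : p != 0.
  have hn1 : (n.-1 < n)%N by rewrite ltn_predL.
  apply/eqP => /(congr1 (fun q : {poly F} => q`_(2 ^ n.-1))).
  rewrite coef0 /p coef_sum.
  rewrite (bigD1 (Ordinal hn1)) //= coefXn eqxx big1 ?addr0.
    by move=> h; move: (oner_neq0 F); rewrite -h eqxx.
  move=> i hi; rewrite coefXn eqn_exp2l //.
  by case: eqP => // h; move: hi; rewrite -val_eqE /= h eqxx.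
have sp : (size p <= (2 ^ n.-1).+1)%N.
  apply: leq_trans (size_sum _ _ _) _.
  apply/bigmax_leqP => i _; rewrite size_polyXn ltnS leq_exp2l //.
  by rewrite -ltnS prednK.
case: (boolP [forall y : F, trace n y == 0]) => [/forallP h | ].
  have := max_poly_roots pn0 (rs := enum F).
  rewrite enum_uniq -cardE hcard.
  have -> : all (root p) (enum F).
    by apply/allP => y _; rewrite /root hp h.
  move=> /(_ isT isT) h2.
  have := leq_trans h2 sp; rewrite ltnS leq_exp2l // -ltnS prednK //.
  by rewrite ltnn.
by rewrite negb_forall => /existsP[y hy]; exists y.
Qed.

Lemma sgnF_add (F : finFieldType) (hchar : (2 \in [pchar F])%N) (a b : F) :
  bit a -> bit b -> sgnF (a + b) = sgnF a * sgnF b.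
Proof.
move=> /bitP[]-> /bitP[]->; rewrite /sgnF ?addr0 ?add0r ?eqxx ?oner_eq0 //.
by rewrite (addrr_pchar2 hchar) eqxx.
Qed.

Lemma sgnb_ne (F : finFieldType) (e : F) : sgnb (e != 0) = sgnF e.
Proof. by rewrite /sgnb /sgnF; case: (e == 0). Qed.

Lemma sgnF_sq (F : finFieldType) (e : F) : sgnF e * sgnF e = 1.
Proof. by rewrite /sgnF; case: (e == 0); rewrite ?mulr1 ?mulrNN ?mulr1. Qed.

Lemma bit_trace_n (F : finFieldType) (hchar : (2 \in [pchar F])%N) n
  (hcard : #|F| = (2 ^ n)%N) (z : F) : bit (trace n z).
Proof. by apply: (trace_sq hchar); rewrite (frobK hcard). Qed.

Lemma char_sum (F : finFieldType) (hchar : (2 \in [pchar F])%N) n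
  (hcard : #|F| = (2 ^ n)%N) (hn : (0 < n)%N) (c : F) :
  \sum_(y : F) sgnF (trace n (y * c)) = if c == 0 then (#|F|)%:Z else 0.
Proof.
case: eqP => [->|/eqP hc].
  rewrite (eq_bigr (fun _ => 1)).
    by rewrite sumr_const natz.
  move=> y _; rewrite mulr0 /trace big1 /sgnF ?eqxx // => i _; exact: frob0.
have [y0 hy0] := trace_nonzero hcard hn.
have e1 : trace n y0 = 1 by case: (bitP (bit_trace_n hchar hcard y0)) hy0 => ->; rewrite ?eqxx.
have : \sum_(y : F) sgnF (trace n (y * c)) = - \sum_(y : F) sgnF (trace n (y * c)).
  rewrite [LHS](reindex_inj (addIr (y0 / c))) /= -sumrN; apply: eq_bigr => y _.
  rewrite mulrDl divfK // (trace_add hchar) e1 (sgnF_add hchar).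
  - by rewrite /sgnF oner_eq0 mulrN1.
  - exact: (bit_trace_n hchar hcard).
  - by rewrite /bit expr1n.
move/eqP; rewrite -addr_eq0 -mulr2n mulrn_eq0 /= => /eqP //.
Qed.

Lemma geom2 (F : finFieldType) (hchar : (2 \in [pchar F])%N) (z : F) N :
  (1 + z) * \sum_(1 <= i < N.+1) z ^+ i = z ^+ N.+1 + z.
Proof.
elim: N => [|N IH]; first by rewrite big_geq // mulr0 expr1 (addrr_pchar2 hchar).
rewrite big_nat_recr //= mulrDr IH mulrDl mul1r -exprS.
by rewrite addrACA (addrr_pchar2 hchar) add0r addrC.
Qed.

Definition Tf (F : finFieldType) k (x : F) := x + x ^+ (2 ^ k).

Lemma Gterm (F : finFieldType) k r (x : F) i :
  x ^+ ((i * 2 ^ (k - r) + 1) * (2 ^ k - 1) + 1) =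
  x * x ^+ (2 ^ k - 1) * (x ^+ (2 ^ k - 1) ^+ (2 ^ (k - r))) ^+ i.
Proof.
rewrite exprD expr1 mulrC (mulnC _ (2 ^ k - 1)%N) exprM exprD expr1.
by rewrite mulnC exprM -mulrA (mulrC (_ ^+ i)).
Qed.

Lemma G0 (F : finFieldType) k r : Gfun k r (0 : F) = 0.
Proof. by rewrite /Gfun big1 // => i _; rewrite expr0n addn1. Qed.

Lemma GI (F : finFieldType) (hchar : (2 \in [pchar F])%N) k r
  (hcard : #|F| = (2 ^ (k + k))%N) (hrk : (r <= k)%N) (x : F) :
  (Tf k x) ^+ (2 ^ (k - r)) * Gfun k r x =
  x ^+ (2 ^ (k - r)).+1 + (x ^+ (2 ^ k)) ^+ (2 ^ (k - r)).+1.
Proof.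
have [->|x0] := eqVneq x 0.
  by rewrite G0 mulr0 !expr0n /= expn_eq0 add0r expr0n.
have K0 : (0 < 2 ^ k)%N by rewrite expn_gt0.
set K := (2 ^ k)%N in K0 *; set s := (2 ^ (k - r))%N.
set u := x ^+ (K - 1); set z := u ^+ s.
have xK : x ^+ K = x * u by rewrite /u -exprS subn1 prednK.
have Gx : Gfun k r x = x * u * \sum_(1 <= i < 2 ^ r) z ^+ i.
  rewrite /Gfun mulr_sumr; apply: eq_bigr => i _.
  by rewrite Gterm.
have uK1 : u * u ^+ K = 1.
  apply: (mulIf x0); rewrite mul1r /u -exprS -exprM.
  rewrite -exprSr.
  have -> : ((K - 1) * K.+1).+1 = (2 ^ (k + k))%N.
    rewrite expnD -/K; move: K0; clear; nia.
  exact: (frobK hcard).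
have zr : z ^+ (2 ^ r) = u ^+ K.
  by rewrite /z -exprM -expnD subnK.
have Ts : (Tf k x) ^+ s = x ^+ s * (1 + z).
  by rewrite /Tf (frobD hchar) -/K xK exprMn mulrDr mulr1.
have := geom2 hchar z (2 ^ r - 1); rewrite subn1 prednK ?expn_gt0 // zr => hg.
rewrite Ts Gx xK.
move: hg; set S := \sum_(_ <= _ < _) _ => hg.
have -> : x ^+ s * (1 + z) * (x * u * S) = x ^+ s * x * (u * ((1 + z) * S)) by ring.
rewrite hg mulrDr uK1 !exprS /z exprMn; ring.
Qed.

Lemma GV (F : finFieldType) (hchar : (2 \in [pchar F])%N) k r (hr : (0 < r)%N) (x : F) :
  x ^+ (2 ^ k) = x -> Gfun k r x = x.
Proof.
move=> hx; have [->|x0] := eqVneq x 0; first exact: G0.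
have u1 : x ^+ (2 ^ k - 1) = 1.
  apply: (mulIf x0); rewrite mul1r -exprSr subn1 prednK ?expn_gt0 //.
rewrite /Gfun (eq_bigr (fun _ => x)); last by move=> i _; rewrite Gterm u1 expr1n mulr1 expr1n mulr1.
rewrite sumr_const_nat.
have -> : (2 ^ r - 1 = (2 ^ r.-1 - 1) * 2 + 1)%N.
  rewrite -(prednK hr) expnS /=.
  have : (0 < 2 ^ r.-1)%N by rewrite expn_gt0.
  move: (2 ^ r.-1)%N => m; lia.
by rewrite mulrnDr mulnC mulrnA (mulrn_pchar hchar) mul0rn add0r.
Qed.

Lemma TfV (F : finFieldType) (hchar : (2 \in [pchar F])%N) k
  (hcard : #|F| = (2 ^ (k + k))%N) (x : F) : (Tf k x) ^+ (2 ^ k) = Tf k x.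
Proof. by rewrite /Tf (frobD hchar) -exprM -expnD (frobK hcard) addrC. Qed.

Lemma Tf_add (F : finFieldType) (hchar : (2 \in [pchar F])%N) k (x v : F) :
  v ^+ (2 ^ k) = v -> Tf k (x + v) = Tf k x.
Proof.
move=> hv; rewrite /Tf (frobD hchar) hv addrACA (addrr_pchar2 hchar) addr0 //.
Qed.

Lemma Tf0V (F : finFieldType) (hchar : (2 \in [pchar F])%N) k (x : F) :
  Tf k x = 0 -> x ^+ (2 ^ k) = x.
Proof. by move/eqP; rewrite /Tf addr_eq0 (oppr_pchar2 hchar) => /eqP. Qed.

Lemma GinV (F : finFieldType) (hchar : (2 \in [pchar F])%N) k r
  (hcard : #|F| = (2 ^ (k + k))%N) (hr : (0 < r)%N) (hrk : (r <= k)%N) (x : F) :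
  (Gfun k r x) ^+ (2 ^ k) = Gfun k r x.
Proof.
have [/(Tf0V hchar) hx|T0] := eqVneq (Tf k x) 0.
  by rewrite (GV hchar hr hx) hx.
have Ts0 : Tf k x ^+ (2 ^ (k - r)) != 0 by rewrite expf_neq0.
have hG := GI hchar hcard hrk x.
have -> : Gfun k r x = (Tf k x ^+ (2 ^ (k - r)))^-1 *
    (x ^+ (2 ^ (k - r)).+1 + x ^+ (2 ^ k) ^+ (2 ^ (k - r)).+1).
  by rewrite -hG mulKf.
have hTs : (Tf k x ^+ (2 ^ (k - r))) ^+ (2 ^ k) = Tf k x ^+ (2 ^ (k - r)).
  by rewrite exprAC (TfV hchar hcard).
have hxx : (x ^+ (2 ^ k)) ^+ (2 ^ k) = x by rewrite -exprM -expnD (frobK hcard).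
rewrite exprMn exprVn hTs [X in _ * X](frobD hchar) exprAC [X in _ * (_ + X)]exprAC hxx.
by rewrite addrC.
Qed.

Definition cf (F : finFieldType) k r (x : F) := Tf k x / Tf k x ^+ (2 ^ (k - r)).

Lemma Gshift (F : finFieldType) (hchar : (2 \in [pchar F])%N) k r
  (hcard : #|F| = (2 ^ (k + k))%N) (hr : (0 < r)%N) (hrk : (r <= k)%N) (x v : F) :
  v ^+ (2 ^ k) = v ->
  Gfun k r (x + v) = Gfun k r x + v + v ^+ (2 ^ (k - r)) * cf k r x.
Proof.
move=> hv; rewrite /cf.
have [T0|T0] := eqVneq (Tf k x) 0.
  have hx := Tf0V hchar T0.
  have hxv : (x + v) ^+ (2 ^ k) = x + v by rewrite (frobD hchar) hx hv.
  by rewrite (GV hchar hr hx) (GV hchar hr hxv) T0 mul0r mulr0 addr0.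
have Ts0 : Tf k x ^+ (2 ^ (k - r)) != 0 by rewrite expf_neq0.
apply: (mulfI Ts0).
rewrite -{1}(Tf_add hchar x hv) (GI hchar hcard hrk (x + v)).
rewrite !mulrDr (GI hchar hcard hrk x).
rewrite [X in _ = _ + X]mulrCA [Tf k x ^+ _ * (_ / _)]mulrC divfK //.
set s := (2 ^ (k - r))%N.
rewrite (frobD hchar) hv !exprS /Tf.
rewrite [(x + v) ^+ s](frobD hchar) [(x ^+ (2 ^ k) + v) ^+ s](frobD hchar) [(x + x ^+ (2 ^ k)) ^+ s](frobD hchar).
set a := x ^+ s; set b := (x ^+ (2 ^ k)) ^+ s; set c := x ^+ (2 ^ k); set w := v ^+ s.
transitivity (x * a + c * b + (a + b) * v + w * (x + c) + (w * v + w * v)); first by ring.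
by rewrite (addrr_pchar2 hchar) addr0.
Qed.

Definition pif (F : finFieldType) k r (x : F) := 1 + (cf k r x) ^+ (2 ^ r).

Lemma trace_n_pow (F : finFieldType) (hchar : (2 \in [pchar F])%N) n
  (hcard : #|F| = (2 ^ n)%N) (z : F) j : trace n (z ^+ (2 ^ j)) = trace n z.
Proof. by rewrite (trace_pow hchar) bit_pow //; apply: (bit_trace_n hchar hcard). Qed.

Lemma cfV (F : finFieldType) (hchar : (2 \in [pchar F])%N) k r
  (hcard : #|F| = (2 ^ (k + k))%N) (x : F) : (cf k r x) ^+ (2 ^ k) = cf k r x.
Proof. by rewrite /cf exprMn exprVn exprAC (TfV hchar hcard). Qed.

Lemma trace_shift (F : finFieldType) (hchar : (2 \in [pchar F])%N) k r
  (hcard : #|F| = (2 ^ (k + k))%N) (hr : (0 < r)%N) (hrk : (r <= k)%N) (x y : F) :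
  trace k (1 * Gfun k r (x + Tf k y)) =
  trace k (1 * Gfun k r x) + trace (k + k) (y * pif k r x).
Proof.
rewrite !mul1r (Gshift hchar hcard hr hrk _ (TfV hchar hcard y)).
rewrite !(trace_add hchar) -addrA; congr (_ + _).
rewrite /pif mulrDr mulr1 (trace_add hchar) /Tf -(trace_add hchar) (trace_T hchar); congr (_ + _).
set c := cf k r x; have hc : c ^+ (2 ^ k) = c := @cfV _ hchar k r hcard x.
set s := (2 ^ (k - r))%N.
have -> : (y + y ^+ (2 ^ k)) ^+ s * c = y ^+ s * c + (y ^+ s * c) ^+ (2 ^ k).
  by rewrite (frobD hchar) mulrDl exprMn hc exprAC.
rewrite (trace_T hchar) -(trace_n_pow hchar hcard _ r) exprMn -exprM -expnD subnK //.
rewrite -(trace_n_pow hchar hcard _ k) exprMn -exprM -expnD (frobK hcard).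
by rewrite exprAC hc.
Qed.

Lemma fix_mul (F : finFieldType) (w : F) a m :
  w ^+ (2 ^ a) = w -> w ^+ (2 ^ (a * m)) = w.
Proof.
move=> h; elim: m => [|m IH]; first by rewrite muln0 expr1.
by rewrite mulnS expnD exprM h IH.
Qed.

Lemma fix_sub (F : finFieldType) (hchar : (2 \in [pchar F])%N) (w : F) a b :
  w ^+ (2 ^ (a + b)) = w -> w ^+ (2 ^ a) = w -> w ^+ (2 ^ b) = w.
Proof.
move=> hab ha; apply: (frob_inj hchar (j := a)).
by rewrite -exprM -expnD addnC hab ha.
Qed.

Lemma fix_one (F : finFieldType) (hchar : (2 \in [pchar F])%N) (w : F) r k
  (hr : (0 < r)%N) (hgcd : coprime r k) :
  w ^+ (2 ^ r) = w -> w ^+ (2 ^ k) = w -> w = 0 \/ w = 1.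
Proof.
move=> hr' hk'; apply: bitP.
have [a _ hd] := Bezoutl k hr.
move: hd; rewrite (eqP hgcd) => /dvdnP[q hq].
have h1 : w ^+ (2 ^ (a * k + 1)) = w by rewrite addnC hq mulnC fix_mul.
have := fix_sub hchar h1; rewrite mulnC fix_mul // => /(_ erefl).
by rewrite /bit expn1.
Qed.

Lemma pif_inj (F : finFieldType) (hchar : (2 \in [pchar F])%N) k r
  (hcard : #|F| = (2 ^ (k + k))%N) (hr : (0 < r)%N) (hrk : (r <= k)%N)
  (hgcd : coprime r k) (x x' : F) :
  pif k r x = pif k r x' -> Tf k x = Tf k x'.
Proof.
rewrite /pif => /addrI /(frob_inj hchar); rewrite /cf.
set T := Tf k x; set T' := Tf k x'; set s := (2 ^ (k - r))%N.
have hT : T ^+ (2 ^ k) = T := TfV hchar hcard x.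
have hT' : T' ^+ (2 ^ k) = T' := TfV hchar hcard x'.
have [T0|T0] := eqVneq T 0.
  rewrite T0 mul0r => /esym /eqP; rewrite mulf_eq0 invr_eq0 expf_eq0.
  by case/orP => [|/andP[_]] /eqP ->.
have [T'0|T'0] := eqVneq T' 0.
  rewrite T'0 mul0r => /eqP; rewrite mulf_eq0 invr_eq0 expf_eq0.
  by rewrite (negPf T0) andbF.
move=> hc.
have Ts0 : T ^+ s != 0 by rewrite expf_neq0.
have T's0 : T' ^+ s != 0 by rewrite expf_neq0.
set w := T / T'.
have hws : w ^+ s = w.
  rewrite /w exprMn exprVn.
  rewrite -[X in _ = X / _](divfK Ts0) hc.
  by field; rewrite T'0 T's0.
have hwk : w ^+ (2 ^ k) = w by rewrite /w exprMn exprVn hT hT'.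
have hwr : w ^+ (2 ^ r) = w.
  apply: (fix_sub hchar (a := k - r)); last by [].
  by rewrite subnK.
have w0 : w != 0 by rewrite /w mulf_neq0 ?invr_neq0.
case: (fix_one hchar hr hgcd hwr hwk) => hw; first by move: w0; rewrite hw eqxx.
by apply: (mulIf (invr_neq0 T'0)); rewrite -/w hw mulfV.
Qed.

Lemma trace_wT (F : finFieldType) (hchar : (2 \in [pchar F])%N) k
  (hcard : #|F| = (2 ^ (k + k))%N) (w y : F) :
  trace (k + k) (w * Tf k y) = trace (k + k) (y * Tf k w).
Proof.
rewrite /Tf !mulrDr !(trace_add hchar) mulrC; congr (_ + _).
rewrite -(trace_n_pow hchar hcard _ k) exprMn -exprM -expnD (frobK hcard).
by rewrite mulrC.
Qed.

Lemma chi_shift (F : finFieldType) (hchar : (2 \in [pchar F])%N) k r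
  (hcard : #|F| = (2 ^ (k + k))%N) (hr : (0 < r)%N) (hrk : (r <= k)%N) (w x y : F) :
  sgnb (Glam k r 1 (x + Tf k y)) * sgnF (trace (k + k) (w * (x + Tf k y))) =
  sgnb (Glam k r 1 x) * sgnF (trace (k + k) (w * x)) *
  sgnF (trace (k + k) (y * (pif k r x + Tf k w))).
Proof.
have hc2 : #|F| = (2 ^ (k + k))%N := hcard.
have bG : bit (trace k (1 * Gfun k r x)).
  by apply: (trace_sq hchar); rewrite mul1r (GinV hchar hcard).
rewrite /Glam !sgnb_ne (trace_shift hchar hcard hr hrk) [w * (x + _)]mulrDr.
rewrite [trace _ (w * x + _)](trace_add hchar) (trace_wT hchar hcard).
rewrite [y * (pif _ _ _ + _)]mulrDr [trace _ (y * pif _ _ _ + _)](trace_add hchar).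
rewrite !(sgnF_add hchar) //; try exact: (bit_trace_n hchar hcard).
by rewrite -!mulrA; congr (_ * _); rewrite mulrCA.
Qed.

Lemma walsh_form (F : finFieldType) (hchar : (2 \in [pchar F])%N) k r
  (hcard : #|F| = (2 ^ (k + k))%N) (hk : (0 < k)%N) (hr : (0 < r)%N) (hrk : (r <= k)%N) (w : F) :
  walsh (k + k) (Glam k r 1) w =
  \sum_(x | pif k r x == Tf k w) sgnb (Glam k r 1 x) * sgnF (trace (k + k) (w * x)).
Proof.
set chi := fun x => sgnb (Glam k r 1 x) * sgnF (trace (k + k) (w * x)).
have hn : (0 < k + k)%N by rewrite addn_gt0 hk.
have e1 : forall y, walsh (k + k) (Glam k r 1) w = \sum_x chi (x + Tf k y).
  by move=> y; rewrite /walsh (reindex_inj (addIr (Tf k y))).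
have e2 : (walsh (k + k) (Glam k r 1) w) *+ #|F| =
    \sum_(y : F) \sum_(x : F) chi x * sgnF (trace (k + k) (y * (pif k r x + Tf k w))).
  rewrite -sumr_const; apply: eq_bigr => y _; rewrite (e1 y).
  apply: eq_bigr => x _; exact: chi_shift.
rewrite exchange_big /= in e2.
have e3 : \sum_(x : F) \sum_(y : F) chi x * sgnF (trace (k + k) (y * (pif k r x + Tf k w))) =
   (\sum_(x | pif k r x == Tf k w) chi x) *+ #|F|.
  rewrite -sumrMnl [RHS]big_mkcond /=; apply: eq_bigr => x _.
  rewrite -mulr_sumr (char_sum hchar hcard hn).
  have -> : (pif k r x + Tf k w == 0) = (pif k r x == Tf k w).
    by rewrite addr_eq0 (oppr_pchar2 hchar).
  by case: ifP => _; rewrite ?mulr0 ?mul0rn // -natz mulr_natr.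
rewrite e3 in e2.
apply/eqP; rewrite -(eqr_pMn2r (n := #|F|)) ?e2 //.
by rewrite hcard expn_gt0.
Qed.

Definition epsf (F : finFieldType) k r (w a : F) : int :=
  if [pick x | pif k r x == Tf k w] is Some x0 then sgnF (trace (k + k) (a * x0)) else 1.

Lemma walsh_shift (F : finFieldType) (hchar : (2 \in [pchar F])%N) k r
  (hcard : #|F| = (2 ^ (k + k))%N) (hk : (0 < k)%N) (hr : (0 < r)%N) (hrk : (r <= k)%N)
  (hgcd : coprime r k) (w a : F) :
  a ^+ (2 ^ k) = a ->
  walsh (k + k) (Glam k r 1) (w + a) = epsf k r w a * walsh (k + k) (Glam k r 1) w.
Proof.
move=> ha.
rewrite !(walsh_form hchar hcard hk hr hrk) (Tf_add hchar w ha) /epsf.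
case: pickP => [x0 /eqP hx0 | hnone]; last first.
  by rewrite !big_pred0 ?mulr0 // => x; rewrite hnone.
rewrite mulr_sumr; apply: eq_bigr => x /eqP hx.
have hT : Tf k x = Tf k x0 by apply: (pif_inj hchar hcard hr hrk hgcd); rewrite hx hx0.
have hxx : (x + x0) ^+ (2 ^ k) = x + x0.
  apply: (Tf0V hchar); rewrite /Tf (frobD hchar) addrACA.
  by rewrite -/(Tf k x) -/(Tf k x0) hT (addrr_pchar2 hchar).
have htr : trace (k + k) (a * x) = trace (k + k) (a * x0).
  have : trace (k + k) (a * (x + x0)) = 0.
    by apply: (trace_V hchar); rewrite exprMn ha hxx.
  rewrite mulrDr (trace_add hchar) => /eqP; rewrite addr_eq0 (oppr_pchar2 hchar).
  by move/eqP.
rewrite mulrDl (trace_add hchar) (sgnF_add hchar); try exact: (bit_trace_n hchar hcard).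
by rewrite htr; ring.
Qed.

Lemma sgnF_pm (F : finFieldType) (e : F) : sgnF e = 1 \/ sgnF e = -1.
Proof. by rewrite /sgnF; case: (e == 0); [left | right]. Qed.

Lemma epsf_pm (F : finFieldType) k r (w a : F) : epsf k r w a = 1 \/ epsf k r w a = -1.
Proof. by rewrite /epsf; case: pickP => [x0 _|_]; [exact: sgnF_pm | left]. Qed.

Lemma epsfD (F : finFieldType) (hchar : (2 \in [pchar F])%N) k r
  (hcard : #|F| = (2 ^ (k + k))%N) (w a b : F) :
  epsf k r w (a + b) = epsf k r w a * epsf k r w b.
Proof.
rewrite /epsf; case: pickP => [x0 _|_]; last by rewrite mulr1.
by rewrite mulrDl (trace_add hchar) (sgnF_add hchar) //; exact: (bit_trace_n hchar hcard).
Qed.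

Lemma D2_dual1 (F : finFieldType) (hchar : (2 \in [pchar F])%N) k r
  (hcard : #|F| = (2 ^ (k + k))%N) (hk : (0 < k)%N) (hr : (0 < r)%N) (hrk : (r <= k)%N)
  (hgcd : coprime r k) (a b w : F) :
  a ^+ (2 ^ k) = a -> b ^+ (2 ^ k) = b ->
  D2 (dual (k + k) (Glam k r 1)) a b w = false.
Proof.
move=> ha hb.
have hab : (a + b) ^+ (2 ^ k) = a + b by rewrite (frobD hchar) ha hb.
rewrite /D2 /dual -addrA !(walsh_shift hchar hcard hk hr hrk hgcd) //.
rewrite (@epsfD _ hchar k r hcard).
set W := walsh _ _ w.
have hneg : forall e : int, e = -1 -> (e * W < 0) = (0 < W).
  by move=> e ->; rewrite mulN1r oppr_lt0.
have hpos : forall e : int, e = 1 -> (e * W < 0) = (W < 0).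
  by move=> e ->; rewrite mul1r.
case: (epsf_pm k r w a) => ea; case: (epsf_pm k r w b) => eb;
  rewrite ea eb ?mulN1r ?mul1r ?opprK ?oppr_lt0;
  by case: (W < 0); case: (0 < W).
Qed.

Lemma delta_eq (F : finFieldType) (hchar : (2 \in [pchar F])%N) k r
  (hcard : #|F| = (2 ^ (k + k))%N) (hr1 : (1 < r)%N) (hrk : (r < k)%N)
  (lam delta : F) (hlam : lam ^+ (2 ^ k) = lam) (hlam0 : lam != 0)
  (hdelta : delta ^+ ((2 ^ k - 1) * ((2 ^ (r - 1) - 1) * 2 ^ (k - r) + 1) + 1) = lam) :
  delta = lam.
Proof.
set K := (2 ^ k)%N in hlam hdelta *.
set s := (2 ^ (k - r))%N in hdelta.
set m := ((2 ^ (r - 1) - 1) * s + 1)%N in hdelta.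
have hK : K = (2 * 2 ^ (r - 1) * s)%N.
  rewrite /K /s -expnS -expnD; congr (2 ^ _)%N; lia.
have ha : (1 <= 2 ^ (r - 1))%N by rewrite expn_gt0.
have hs : (1 <= s)%N by rewrite expn_gt0.
have d0 : delta != 0.
  by apply: contraNneq hlam0 => d0; rewrite -hdelta d0 expr0n addn1.
set y := delta ^+ K.
have yK : y ^+ K = delta by rewrite /y -exprM -expnD (frobK hcard).
have Eq1 : lam * delta ^+ m = y ^+ m * delta.
  rewrite -hdelta -exprD /y -exprM -exprSr; congr (_ ^+ _).
  rewrite hK; move: ha hs; rewrite /m; clear; move: (2 ^ (r - 1))%N s => a s; nia.
have Eq2 : lam * y ^+ m = delta ^+ m * y.
  have := congr1 (fun z => z ^+ K) Eq1; rewrite /= !exprMn hlam.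
  by rewrite -!exprM !(mulnC _ K) !exprM yK -/y.
have y0 : y != 0 by rewrite expf_neq0.
have hm : (2 * m + 2 * s = K + 2)%N.
  rewrite hK; move: ha hs; rewrite /m; clear; move: (2 ^ (r - 1))%N s => a s; nia.
clearbody m.
have E : y ^+ (2 * m) * delta = delta ^+ (2 * m) * y.
  have := congr1 (fun z => z * y ^+ m) Eq1; have := congr1 (fun z => z * delta ^+ m) Eq2.
  rewrite /= mul2n -addnn !exprD => h2 h1.
  rewrite -[LHS]mulrA [_ * delta]mulrC mulrA -h1 -[RHS]mulrA [_ * y]mulrC mulrA -h2.
  by rewrite mulrAC.
have Ys : y ^+ (2 * s) = delta ^+ (2 * s).
  have nz : delta ^+ (2 * m) * y != 0 by rewrite mulf_neq0 ?expf_neq0.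
  apply: (mulfI nz).
  transitivity (y ^+ (2 * m + 2 * s) * delta).
    by rewrite exprD -E; ring.
  transitivity (delta ^+ (2 * m + 2 * s) * y); last by rewrite exprD; ring.
  by rewrite hm !exprD yK /y; ring.
have yd : y = delta.
  apply: (frob_inj hchar (j := (k - r).+1)); by rewrite expnS -/s.
have dK : delta = delta * 1 by rewrite mulr1.
apply: (mulIf (expf_neq0 m d0)).
by rewrite Eq1 yd mulrC.
Qed.

Lemma Gscale (F : finFieldType) k r (d z : F) :
  d ^+ (2 ^ k) = d -> d != 0 -> Gfun k r (d * z) = d * Gfun k r z.
Proof.
move=> hd d0.
have u1 : d ^+ (2 ^ k - 1) = 1.
  apply: (mulIf d0); rewrite mul1r -exprSr subn1 prednK ?expn_gt0 //.
rewrite /Gfun mulr_sumr; apply: eq_bigr => i _.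
by rewrite exprMn [d ^+ _]Gterm u1 expr1n mulr1 expr1n mulr1.
Qed.

Lemma walsh_scale (F : finFieldType) k r n (d x : F) :
  d ^+ (2 ^ k) = d -> d != 0 ->
  walsh n (Glam k r d) x = walsh n (Glam k r 1) (d^-1 * x).
Proof.
move=> hd d0; rewrite /walsh [RHS](reindex_inj (mulfI d0)) /=.
apply: eq_bigr => z _; rewrite /Glam !mul1r Gscale //.
by rewrite mulrACA mulVf // mul1r.
Qed.

Unset Implicit Arguments.

Theorem proposition3 (F : finFieldType) (n k r : nat)
  (hchar : (2 \in [pchar F])%N) (hcard : #|F| = (2 ^ n)%N)
  (hn : n = (2 * k)%N) (hr1 : (1 < r)%N) (hrk : (r < k)%N)
  (hgcd : coprime r k)
  (lam delta : F) (hlam_sub : lam ^+ (2 ^ k) = lam) (hlam0 : lam != 0)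
  (hdelta : delta ^+ ((2 ^ k - 1) * ((2 ^ (r - 1) - 1) * 2 ^ (k - r) + 1) + 1) = lam) :
  (forall x : F, dual n (Glam k r lam) x = dual n (Glam k r 1) (delta^-1 * x)) /\
  (forall a b : F, a ^+ (2 ^ k) = a -> a != 0 -> b ^+ (2 ^ k) = b -> b != 0 ->
     forall x : F, D2 (dual n (Glam k r lam)) a b x = false).
Proof.
have e : n = (k + k)%N by rewrite hn mul2n addnn.
rewrite {}e in hcard *.
have hd := delta_eq hchar hcard hr1 hrk hlam_sub hlam0 hdelta.
subst delta.
have hk : (0 < k)%N by apply: leq_ltn_trans hrk.
have hr : (0 < r)%N by apply: ltnW.
have hrk' : (r <= k)%N by apply: ltnW.
have P1 : forall x : F, dual (k + k) (Glam k r lam) x = dual (k + k) (Glam k r 1) (lam^-1 * x).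
  by move=> x; rewrite /dual (@walsh_scale F k r _ lam x hlam_sub hlam0).
split; first exact: P1.
move=> a b ha _ hb _ x.
have hV : forall c : F, c ^+ (2 ^ k) = c -> (lam^-1 * c) ^+ (2 ^ k) = lam^-1 * c.
  by move=> c hc; rewrite exprMn exprVn hlam_sub hc.
have := D2_dual1 hchar hcard hk hr hrk' hgcd (lam^-1 * x) (hV a ha) (hV b hb).
by rewrite /D2 !P1 !mulrDr.
Qed.
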